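(* Define finite blocks of positive reals as follows: $b_1=(\tfrac12)$, $b_2=(2)$, $b_3=(\tfrac12)$; for $n\ge3$ let $s_n=\sum_{i=2}^n|b_i|$ where $|b_i|$ is the length of $b_i$; for even $n\ge4$, $b_n$ consists of $s_{n-1}$ copies of $2$; for odd $n\ge5$, $b_n$ consists of a $\tfrac12$ followed by $s_{n-2}-1$ repetitions of the string ($s_{n-1}$ copies of $1$, then one $\tfrac12$). Let $w=(w_n)_{n\ge0}$ be the concatenation $b_1b_2b_3\cdots$ (so $w_0$ is the entry of $b_1$, and the blocks $b_2,\dots,b_n$ occupy the indices $1,\dots,s_n$). For $i,j\ge1$ put $M_i^j=w_iw_{i+1}\cdots w_{i+j-1}$, and put $n_k=s_{2k+2}$. Then: (a) $M_1^{s_{2k+1}}=1$ for all $k\ge1$; (b) for all $k\ge2$: $M_i^{n_k}\ge\tfrac12$ whenever $i>s_{2k+1}$, and $M_i^{n_k}\ge 2^k$ whenever $1\le i\le s_{2k+1}$; (c) on $X=c_0$ or $X=\ell^p$ ($1\le p<\infty$), the weighted backward shift $B_w$ is surjective, not mixing, strongly topologically transitive, and the forward shift $S$ satisfies $S^{n_k}x\to0$ as $k\to\infty$ for every $x\in X$.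
   Context: For a bounded sequence $w=(w_n)_{n\ge0}$ of positive numbers, the weighted backward shift $B_w$ on $X$ is defined on the canonical basis $(e_n)_{n\ge0}$ by $B_we_0=0$, $B_we_n=w_ne_{n-1}$ ($n\ge1$). When $\sup_n 1/w_n<\infty$, the associated forward shift $S$ is the bounded operator with $Se_n=e_{n+1}/w_{n+1}$; it satisfies $B_wS=I$. For an operator $T$ and nonempty open $U,V$, $N(U,V)=\{n\in\mathbb{N}_0:T^n(U)\cap V\ne\emptyset\}$; $T$ is mixing if every $N(U,V)$ is cofinite; $T$ is strongly topologically transitive if for every nonempty open $U$, $X\setminus\{0\}\subseteq\bigcup_{n\ge0}T^n(U)$. *)

(* Defs.v *)
From Stdlib Require Import Reals Lra Lia List.
From Coquelicot Require Import Coquelicot.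
Import ListNotations.
Open Scope R_scope.

(** [sfrom bs m] = sum_{i=2}^m |b_i|, where bs = [b_1; ...; b_N] (1-indexed blocks). *)
Fixpoint sfrom (bs : list (list R)) (m : nat) : nat :=
  match m with
  | O => O
  | S O => O
  | S m' => (sfrom bs m' + length (nth m' bs []))%nat
  end.

(** The n-th block, computed from the list of previous blocks bs = [b_1;...;b_(n-1)]. *)
Definition newblock (n : nat) (bs : list (list R)) : list R :=
  match n with
  | 1%nat => [/2]
  | 2%nat => [2]
  | 3%nat => [/2]
  | _ =>
    if Nat.even n then repeat 2 (sfrom bs (n - 1))
    else (/2) :: concat (repeat (repeat 1 (sfrom bs (n - 1)) ++ [/2])
                                (sfrom bs (n - 2) - 1))
  end.

Fixpoint allb (n : nat) : list (list R) :=
  match n with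
  | O => []
  | S n' => allb n' ++ [newblock n (allb n')]
  end.

Definition b (n : nat) : list R := nth (n - 1) (allb n) [].

Definition s (n : nat) : nat := sfrom (allb n) n.

(** w_j = j-th entry (0-indexed) of b_1 b_2 b_3 ...; the prefix b_1...b_(j+1)
    already has length 1 + s_(j+1) >= j+1. *)
Definition w (j : nat) : R := nth j (concat (allb (S j))) 0.

Fixpoint M (i j : nat) : R :=
  match j with
  | O => 1
  | S j' => w i * M (S i) j'
  end.

Definition nk (k : nat) : nat := s (2 * k + 2).

Inductive space := C0 | Lp (p : R).

Definition valid_space (X : space) : Prop :=
  match X with C0 => True | Lp p => 1 <= p end.

(** a^p for a >= 0, with 0^p = 0. *)
Definition rpow (a p : R) : R := if Rle_dec a 0 then 0 else Rpower a p.

Definition inX (X : space) (x : nat -> R) : Prop :=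
  match X with
  | C0 => is_lim_seq x 0
  | Lp p => ex_series (fun n => rpow (Rabs (x n)) p)
  end.

Definition normX (X : space) (x : nat -> R) : R :=
  match X with
  | C0 => real (Sup_seq (fun n => Rabs (x n)))
  | Lp p => rpow (Series (fun n => rpow (Rabs (x n)) p)) (/ p)
  end.

Definition seq_sub (x y : nat -> R) : nat -> R := fun n => x n - y n.
Definition zero_seq : nat -> R := fun _ => 0.

Definition openX (X : space) (U : (nat -> R) -> Prop) : Prop :=
  (forall x, U x -> inX X x) /\
  (forall x, U x -> exists eps, 0 < eps /\
     forall y, inX X y -> normX X (seq_sub y x) < eps -> U y).

Definition Bw (x : nat -> R) : nat -> R := fun n => w (S n) * x (S n).

Definition Fw (x : nat -> R) : nat -> R :=
  fun n => match n with O => 0 | S m => x m / w (S m) end.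

Definition surjective_on (X : space) (T : (nat -> R) -> (nat -> R)) : Prop :=
  forall y, inX X y -> exists x, inX X x /\ T x = y.

Definition in_N (T : (nat -> R) -> (nat -> R)) (U V : (nat -> R) -> Prop) (n : nat) : Prop :=
  exists x, U x /\ V (Nat.iter n T x).

Definition mixing (X : space) (T : (nat -> R) -> (nat -> R)) : Prop :=
  forall U V, openX X U -> openX X V -> (exists x, U x) -> (exists x, V x) ->
    exists N, forall n, (N <= n)%nat -> in_N T U V n.

Definition strongly_transitive (X : space) (T : (nat -> R) -> (nat -> R)) : Prop :=
  forall U, openX X U -> (exists x, U x) ->
    forall y, inX X y -> y <> zero_seq ->
      exists n x, U x /\ Nat.iter n T x = y.

(* Main.v *)
Require Import Defs.
From Stdlib Require Import Reals.
From Coquelicot Require Import Coquelicot.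
From Stdlib Require Import Lra Lia List FunctionalExtensionality.
Import ListNotations.
Open Scope R_scope.

Lemma allb_S n : allb (S n) = allb n ++ [newblock (S n) (allb n)].
Proof. reflexivity. Qed.

Lemma allb_length n : length (allb n) = n.
Proof. induction n; [reflexivity|]. rewrite allb_S, length_app, IHn; simpl; lia. Qed.

Lemma allb_nth_mono n m i d : (n <= m)%nat -> (i < n)%nat -> nth i (allb m) d = nth i (allb n) d.
Proof.
  intros Hnm Hi. induction Hnm; [reflexivity|].
  rewrite allb_S, app_nth1; [assumption|]. rewrite allb_length; lia.
Qed.

Lemma b_nth n i : (i < n)%nat -> nth i (allb n) [] = b (S i).
Proof.
  intros H. unfold b. replace (S i - 1)%nat with i by lia.
  apply allb_nth_mono; lia.
Qed.

Lemma b_eq n : b (S n) = newblock (S n) (allb n).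
Proof.
  unfold b. replace (S n - 1)%nat with n by lia. rewrite allb_S, app_nth2; rewrite allb_length; [|lia].
  rewrite Nat.sub_diag. reflexivity.
Qed.

Lemma sfrom_ext bs1 bs2 m : (forall j, (j < m)%nat -> nth j bs1 [] = nth j bs2 []) -> sfrom bs1 m = sfrom bs2 m.
Proof.
  induction m; intros H; [reflexivity|].
  destruct m; [reflexivity|].
  change (sfrom bs1 (S (S m))) with (sfrom bs1 (S m) + length (nth (S m) bs1 []))%nat.
  change (sfrom bs2 (S (S m))) with (sfrom bs2 (S m) + length (nth (S m) bs2 []))%nat.
  rewrite IHm, H; [reflexivity|lia|]. intros; apply H; lia.
Qed.

Lemma sfrom_allb n m : (m <= n)%nat -> sfrom (allb n) m = s m.
Proof.
  intros H. unfold s. apply sfrom_ext. intros j Hj.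
  rewrite (allb_nth_mono m n); [reflexivity|lia|lia].
Qed.

Lemma s_S m : (1 <= m)%nat -> s (S m) = (s m + length (b (S m)))%nat.
Proof.
  intros H. unfold s at 1. destruct m; [lia|].
  change (sfrom (allb (S (S m))) (S (S m))) with (sfrom (allb (S (S m))) (S m) + length (nth (S m) (allb (S (S m))) []))%nat.
  rewrite sfrom_allb by lia. rewrite b_nth by lia. reflexivity.
Qed.

Lemma s_1 : s 1 = 0%nat. Proof. reflexivity. Qed.

Lemma b_big m : b (S (S (S (S m)))) =
  if Nat.even m then repeat 2 (s (m+3))
  else (/2) :: concat (repeat (repeat 1 (s (m+3)) ++ [/2]) (s (m+2) - 1)).
Proof.
  rewrite b_eq. unfold newblock.
  replace (Nat.even (S (S (S (S m))))) with (Nat.even m) by reflexivity.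
  replace (S (S (S (S m))) - 1)%nat with (m+3)%nat by lia.
  replace (S (S (S (S m))) - 2)%nat with (m+2)%nat by lia.
  rewrite !sfrom_allb by lia. reflexivity.
Qed.

Lemma b_even j : b (2*j+4) = repeat 2 (s (2*j+3)).
Proof.
  replace (2*j+4)%nat with (S (S (S (S (2*j)))))%nat by lia. rewrite b_big.
  rewrite Nat.even_mul. simpl. try (repeat f_equal; lia).
Qed.

Lemma b_odd j : b (2*j+5) = (/2) :: concat (repeat (repeat 1 (s (2*j+4)) ++ [/2]) (s (2*j+3) - 1)).
Proof.
  replace (2*j+5)%nat with (S (S (S (S (2*j+1)))))%nat by lia. rewrite b_big.
  replace (Nat.even (2*j+1)) with false.
  2:{ rewrite Nat.even_add, Nat.even_mul. reflexivity. }
  replace (2*j+1+3)%nat with (2*j+4)%nat by lia. replace (2*j+1+2)%nat with (2*j+3)%nat by lia. reflexivity.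
Qed.

Lemma b1 : b 1 = [/2]. Proof. reflexivity. Qed.
Lemma b2 : b 2 = [2]. Proof. reflexivity. Qed.
Lemma b3 : b 3 = [/2]. Proof. reflexivity. Qed.
Lemma s2 : s 2 = 1%nat. Proof. rewrite s_S by lia. rewrite b2. reflexivity. Qed.
Lemma s3 : s 3 = 2%nat. Proof. rewrite s_S by lia. rewrite b3, s2. reflexivity. Qed.

Lemma n_cases n : (4 <= n)%nat -> exists j, n = (2*j+4)%nat \/ n = (2*j+5)%nat.
Proof.
  intros H. destruct (Nat.Even_or_Odd (n-4)) as [[j Hj]|[j Hj]]; exists j; lia.
Qed.

Lemma length_concat_repeat {A} (l : list A) r : length (concat (repeat l r)) = (r * length l)%nat.
Proof. induction r; simpl; [reflexivity|]. rewrite length_app, IHr. lia. Qed.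

Lemma len_even j : length (b (2*j+4)) = s (2*j+3).
Proof. rewrite b_even, repeat_length. reflexivity. Qed.

Lemma len_odd j : length (b (2*j+5)) = (1 + (s (2*j+3) - 1) * (s (2*j+4) + 1))%nat.
Proof. rewrite b_odd. simpl. rewrite length_concat_repeat, length_app, repeat_length. simpl. lia. Qed.

Lemma s_even j : s (2*j+4) = (2 * s (2*j+3))%nat.
Proof. replace (2*j+4)%nat with (S (2*j+3)) by lia. rewrite s_S by lia.
  replace (S (2*j+3)) with (2*j+4)%nat by lia. rewrite len_even. lia. Qed.

Lemma s_odd j : s (2*j+5) = (s (2*j+4) + 1 + (s (2*j+3) - 1) * (s (2*j+4) + 1))%nat.
Proof. replace (2*j+5)%nat with (S (2*j+4)) by lia. rewrite s_S by lia.
  replace (S (2*j+4)) with (2*j+5)%nat by lia. rewrite len_odd. lia. Qed.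

Lemma s_odd_ge2 j : (2 <= s (2*j+3))%nat.
Proof.
  induction j. { replace (2*0+3)%nat with 3%nat by lia. rewrite s3. lia. }
  replace (2 * S j + 3)%nat with (2*j+5)%nat by lia. rewrite s_odd, s_even. lia.
Qed.

Lemma len_pos n : (1 <= n)%nat -> (1 <= length (b n))%nat.
Proof.
  intros H. destruct (Compare_dec.le_lt_dec 4 n).
  - destruct (n_cases n l) as [j [->| ->]].
    + rewrite len_even. pose proof (s_odd_ge2 j). lia.
    + rewrite len_odd. apply Nat.le_add_r.
  - destruct n as [|[|[|[|]]]]; try lia; reflexivity.
Qed.

Lemma s_lt m n : (1 <= m)%nat -> (m < n)%nat -> (s m < s n)%nat.
Proof.
  intros H1 H2. induction H2.
  - rewrite s_S by lia. pose proof (len_pos (S m)). lia.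
  - rewrite s_S by lia. pose proof (len_pos (S m0)). lia.
Qed.

Lemma s_le m n : (m <= n)%nat -> (s m <= s n)%nat.
Proof.
  intros H. destruct (Nat.eq_dec m n) as [->|]; [lia|].
  destruct m. { unfold s at 1. simpl. lia. }
  pose proof (s_lt (S m) n). lia.
Qed.

Lemma s_ge n : (n - 1 <= s n)%nat.
Proof.
  induction n. { simpl; lia. }
  destruct n. { simpl. lia. }
  rewrite s_S by lia. pose proof (len_pos (S (S n))). lia.
Qed.

Lemma allb_prefix n d : exists L, allb (n + d) = allb n ++ L.
Proof.
  induction d. { exists []. rewrite Nat.add_0_r, app_nil_r. reflexivity. }
  destruct IHd as [L HL]. rewrite Nat.add_succ_r, allb_S, HL.
  eexists. rewrite <- app_assoc. reflexivity.
Qed.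

Lemma length_concat_allb n : (1 <= n)%nat -> length (concat (allb n)) = (1 + s n)%nat.
Proof.
  induction n; intros H; [lia|].
  destruct n. { reflexivity. }
  rewrite allb_S, <- b_eq, concat_app, length_app, IHn by lia. simpl concat.
  rewrite app_nil_r. rewrite (s_S (S n)) by lia. lia.
Qed.

Lemma w_concat N j : (j < length (concat (allb N)))%nat -> w j = nth j (concat (allb N)) 0.
Proof.
  intros H. unfold w.
  destruct (allb_prefix N (S j)) as [L1 H1].
  destruct (allb_prefix (S j) N) as [L2 H2].
  assert (E: (N + S j = S j + N)%nat) by lia.
  assert (Hj : (j < length (concat (allb (S j))))%nat).
  { rewrite length_concat_allb by lia. pose proof (s_ge (S j)). lia. }
  transitivity (nth j (concat (allb (N + S j))) 0).
  - rewrite E, H2, concat_app, app_nth1 by assumption. reflexivity.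
  - rewrite H1, concat_app, app_nth1 by assumption. reflexivity.
Qed.

Lemma w_block n t : (2 <= n)%nat -> (t < length (b n))%nat ->
  w (1 + s (n-1) + t) = nth t (b n) 0.
Proof.
  intros Hn Ht.
  destruct n as [|n]; [lia|].
  replace (S n - 1)%nat with n in * by lia.
  assert (Hc : concat (allb (S n)) = concat (allb n) ++ b (S n)).
  { rewrite allb_S, <- b_eq, concat_app. simpl concat. rewrite app_nil_r. reflexivity. }
  rewrite (w_concat (S n)).
  - rewrite Hc, app_nth2; rewrite length_concat_allb by lia; [|lia].
    f_equal. lia.
  - rewrite length_concat_allb by lia. rewrite s_S by lia. lia.
Qed.

Lemma nth_concat_repeat {A} (l : list A) r c d x :
  (c < r)%nat -> (d < length l)%nat -> nth (c * length l + d) (concat (repeat l r)) x = nth d l x.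
Proof.
  revert r. induction c; intros r Hc Hd.
  - destruct r; [lia|]. simpl. rewrite app_nth1 by lia. reflexivity.
  - destruct r; [lia|]. simpl. rewrite app_nth2 by lia.
    replace (length l + c * length l + d - length l)%nat with (c * length l + d)%nat by lia.
    apply IHc; lia.
Qed.

Lemma w1 : w 1 = 2.
Proof. pose proof (w_block 2 0). rewrite b2 in H. simpl in H. apply H; simpl; lia. Qed.
Lemma w2 : w 2 = /2.
Proof. pose proof (w_block 3 0). rewrite b3 in H. replace (3-1)%nat with 2%nat in H by lia.
  rewrite s2 in H. simpl in H. apply H; simpl; lia. Qed.
Lemma w0 : w 0 = /2. Proof. reflexivity. Qed.

Lemma w_even j t : (t < s (2*j+3))%nat -> w (1 + s (2*j+3) + t) = 2.
Proof.
  intros Ht. pose proof (w_block (2*j+4) t) as H.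
  replace (2*j+4-1)%nat with (2*j+3)%nat in H by lia.
  rewrite H by (try rewrite len_even; lia). rewrite b_even. apply nth_repeat_lt. assumption.
Qed.

Lemma w_odd0 j : w (1 + s (2*j+4)) = /2.
Proof.
  pose proof (w_block (2*j+5) 0) as H.
  replace (2*j+5-1)%nat with (2*j+4)%nat in H by lia. rewrite Nat.add_0_r in H.
  rewrite H by (try rewrite len_odd; nia). rewrite b_odd. reflexivity.
Qed.

Lemma w_odd j c d : (c < s (2*j+3) - 1)%nat -> (d <= s (2*j+4))%nat ->
  w (2 + s (2*j+4) + c * (s (2*j+4) + 1) + d) = if Nat.eqb d (s (2*j+4)) then /2 else 1.
Proof.
  intros Hc Hd. pose proof (w_block (2*j+5) (1 + c * (s (2*j+4) + 1) + d)) as H.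
  replace (2*j+5-1)%nat with (2*j+4)%nat in H by lia.
  replace (2 + s (2*j+4) + c * (s (2*j+4) + 1) + d)%nat with (1 + s (2 * j + 4) + (1 + c * (s (2 * j + 4) + 1) + d))%nat by lia.
  rewrite H; [| lia | rewrite len_odd; nia].
  pose proof (nth_concat_repeat (repeat 1 (s (2*j+4)) ++ [/2]) (s (2*j+3) - 1) c d 0) as E.
  rewrite length_app, repeat_length in E. simpl length in E.
  replace (s (2*j+4) + 1)%nat with (S (s (2*j+4))) in * by lia.
  rewrite b_odd.
  replace (1 + c * S (s (2*j+4)) + d)%nat with (S (c * S (s (2*j+4)) + d)) by lia.
  cbn [nth]. rewrite E by lia.
  destruct (Nat.eqb_spec d (s (2*j+4))).
  - subst. rewrite app_nth2 by (rewrite repeat_length; lia). rewrite repeat_length, Nat.sub_diag. reflexivity.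
  - rewrite app_nth1 by (rewrite repeat_length; lia). apply nth_repeat_lt. lia.
Qed.

Lemma M_S i j : M i (S j) = M i j * w (i + j).
Proof.
  revert i. induction j; intros i.
  - simpl. rewrite Nat.add_0_r. ring.
  - change (M i (S (S j))) with (w i * M (S i) (S j)). rewrite IHj.
    change (M i (S j)) with (w i * M (S i) j). replace (S i + j)%nat with (i + S j)%nat by lia. ring.
Qed.

Lemma M_add i j1 j2 : M i (j1 + j2) = M i j1 * M (i + j1) j2.
Proof.
  induction j2.
  - rewrite Nat.add_0_r. simpl. ring.
  - rewrite Nat.add_succ_r, !M_S, IHj2. replace (i + j1 + j2)%nat with (i + (j1 + j2))%nat by lia. ring.
Qed.

Section Blk.
Variable j : nat.
Let a := s (2*j+4).
Let r := (s (2*j+3) - 1)%nat.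

Lemma even_int (H0 : M 1 (s (2*j+3)) = 1) t : (t <= s (2*j+3))%nat -> M 1 (s (2*j+3) + t) = 2 ^ t.
Proof.
  induction t; intros Ht.
  - rewrite Nat.add_0_r. simpl. assumption.
  - rewrite Nat.add_succ_r, M_S, IHt by lia.
    replace (1 + (s (2*j+3) + t))%nat with (1 + s (2*j+3) + t)%nat by lia.
    rewrite w_even by lia. simpl. ring.
Qed.

Lemma even_end (H0 : M 1 (s (2*j+3)) = 1) : M 1 (s (2*j+4)) = 2 ^ (s (2*j+3)).
Proof.
  rewrite s_even. replace (2 * s (2*j+3))%nat with (s (2*j+3) + s (2*j+3))%nat by lia.
  apply even_int; auto.
Qed.

Lemma odd_int (H0 : M 1 (s (2*j+3)) = 1) c d : (d <= a)%nat -> (c * (a+1) + d <= r * (a+1))%nat ->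
  M 1 (a + 1 + c * (a+1) + d) = 2 ^ (s (2*j+3)) * (/2) ^ (S c).
Proof.
  pose proof (even_end H0) as HE. fold a in HE.
  revert d. induction c; intros d Hd Hc.
  - induction d.
    + replace (a + 1 + 0 * (a + 1) + 0)%nat with (S a) by lia. rewrite M_S, HE. replace (w (1+a)) with (/2) by (symmetry; apply w_odd0). simpl. ring.
    + rewrite Nat.add_succ_r, M_S, IHd by lia.
      replace (1 + (a + 1 + 0 * (a + 1) + d))%nat with (2 + s (2*j+4) + 0 * (s (2*j+4)+1) + d)%nat by (unfold a; lia).
      rewrite w_odd; [|unfold r in Hc; nia| unfold a in Hd; lia].
      destruct (Nat.eqb_spec d (s (2*j+4))); [unfold a in Hd; lia|]. ring.
  - induction d.
    + rewrite Nat.add_0_r.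
      replace (a + 1 + S c * (a + 1))%nat with (S (a + 1 + c * (a+1) + a)) by lia.
      rewrite M_S, (IHc a) by nia.
      replace (1 + (a + 1 + c * (a + 1) + a))%nat with (2 + s (2*j+4) + c * (s (2*j+4)+1) + s (2*j+4))%nat by (unfold a; lia).
      rewrite w_odd; [| unfold r in Hc; unfold a in Hc; nia | lia].
      rewrite Nat.eqb_refl. simpl. ring.
    + rewrite Nat.add_succ_r, M_S, IHd by lia.
      replace (1 + (a + 1 + S c * (a + 1) + d))%nat with (2 + s (2*j+4) + (S c) * (s (2*j+4)+1) + d)%nat by (unfold a; lia).
      rewrite w_odd; [|unfold r in Hc; unfold a in Hc; nia| unfold a in Hd; lia].
      destruct (Nat.eqb_spec d (s (2*j+4))); [unfold a in Hd; lia|]. ring.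
Qed.

Lemma odd_end (H0 : M 1 (s (2*j+3)) = 1) : M 1 (s (2*j+5)) = 1.
Proof.
  pose proof (s_odd_ge2 j).
  rewrite s_odd. fold a. fold r.
  replace (a + 1 + r * (a + 1))%nat with (a + 1 + r * (a+1) + 0)%nat by lia.
  rewrite (odd_int H0 r 0) by lia.
  replace (S r) with (s (2*j+3)) by (unfold r; lia).
  rewrite <- Rpow_mult_distr. replace (2 * /2) with 1 by field. apply pow1.
Qed.
End Blk.

Lemma M_odd_end j : M 1 (s (2*j+3)) = 1.
Proof.
  induction j.
  - replace (2*0+3)%nat with 3%nat by lia. rewrite s3. simpl. rewrite w1, w2. field.
  - replace (2 * S j + 3)%nat with (2*j+5)%nat by lia. apply odd_end. assumption.
Qed.

Lemma locate x : (1 <= x)%nat -> exists n, (2 <= n)%nat /\ (s (n-1) < x <= s n)%nat.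
Proof.
  induction x; intros H; [lia|].
  destruct x. { exists 2%nat. rewrite s2. replace (2-1)%nat with 1%nat by lia. rewrite s_1. lia. }
  destruct IHx as [n [Hn [H1 H2]]]; [lia|].
  destruct (Nat.eq_dec (S x) (s n)).
  - exists (S n). replace (S n - 1)%nat with n by lia. rewrite s_S by lia.
    pose proof (len_pos (S n)). lia.
  - exists n. lia.
Qed.

Lemma classify x : (1 <= x)%nat ->
  w x = 2 \/ w x = 1 \/
  (w x = /2 /\ (x = 2%nat \/ exists j i, (s (2*j+4) < x <= s (2*j+5))%nat /\
      x = (1 + s (2*j+4) + i * (s (2*j+4) + 1))%nat)).
Proof.
  intros Hx. destruct (locate x Hx) as [n [Hn [H1 H2]]].
  destruct (Compare_dec.le_lt_dec 4 n) as [H4|H4].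
  - destruct (n_cases n H4) as [j [-> | ->]].
    + left. replace (2*j+4-1)%nat with (2*j+3)%nat in H1 by lia.
      rewrite s_even in H2.
      replace x with (1 + s (2*j+3) + (x - 1 - s (2*j+3)))%nat by lia.
      apply w_even. lia.
    + replace (2*j+5-1)%nat with (2*j+4)%nat in H1 by lia.
      pose proof (s_odd j) as So.
      set (a := s (2*j+4)) in *. set (r := (s (2*j+3) - 1)%nat) in *.
      destruct (Nat.eq_dec x (1 + a)) as [E|E].
      * right; right. split. { subst x. apply w_odd0. }
        right. exists j, 0%nat. split; [lia|]. lia.
      * set (q := (x - 2 - a)%nat).
        assert (Hq : (q < r * (a+1))%nat) by (unfold q; lia).
        pose proof (Nat.div_mod q (a+1) ltac:(lia)) as Dq.
        pose proof (Nat.mod_upper_bound q (a+1) ltac:(lia)) as Mq.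
        set (c := (q / (a+1))%nat) in *. set (d := (q mod (a+1))%nat) in *.
        assert (Hc : (c < r)%nat) by nia.
        assert (Ex : x = (2 + a + c * (a+1) + d)%nat) by (unfold q in Dq; lia).
        rewrite Ex. unfold a. rewrite w_odd by (unfold r in Hc; fold a; lia).
        fold a. destruct (Nat.eqb_spec d a).
        -- right; right. split; [reflexivity|]. right. exists j, (S c).
           split; [rewrite <- Ex; lia| unfold a in *; lia].
        -- right; left; reflexivity.
  - destruct n as [|[|[|[|]]]]; try lia.
    + replace x with 1%nat by (rewrite s2 in H2; simpl in H1; lia). left. apply w1.
    + replace x with 2%nat by (rewrite s3 in H2; replace (3-1)%nat with 2%nat in H1 by lia; rewrite s2 in H1; lia).
      right; right. split; [apply w2| left; reflexivity].
Qed.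

Lemma w_vals x : w x = 2 \/ w x = 1 \/ w x = /2.
Proof.
  destruct x. { right; right. apply w0. }
  destruct (classify (S x)) as [H|[H|[H _]]]; auto; lia.
Qed.

Lemma w_pos x : /2 <= w x <= 2.
Proof. destruct (w_vals x) as [H|[H|H]]; rewrite H; lra. Qed.

Lemma separation k x y : (1 <= k)%nat -> (s (2*k+1) < x)%nat -> (x < y)%nat ->
  w x = /2 -> w y = /2 -> (s (2*k+2) < y - x)%nat.
Proof.
  intros Hk Hx Hxy Wx Wy.
  pose proof (s_le 3 (2*k+1) ltac:(lia)) as S3. rewrite s3 in S3.
  destruct (classify x ltac:(lia)) as [H|[H|[_ [H|[j [i [Hb Hxe]]]]]]];
    try (rewrite H in Wx; lra); [lia|].
  destruct (classify y ltac:(lia)) as [H|[H|[_ [H|[j' [i' [Hb' Hye]]]]]]];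
    try (rewrite H in Wy; lra); [lia|].
  assert (Hj : (k <= j + 1)%nat).
  { destruct (Compare_dec.le_lt_dec (2*j+5) (2*k+1)); [|lia].
    pose proof (s_le _ _ l). lia. }
  assert (Ha : (s (2*k+2) <= s (2*j+4))%nat) by (apply s_le; lia).
  destruct (Nat.lt_trichotomy j j') as [Hjj|[<-|Hjj]].
  - pose proof (s_le (2*j+6) (2*j'+4) ltac:(lia)).
    pose proof (s_even (j+1)) as E. replace (2*(j+1)+4)%nat with (2*j+6)%nat in E by lia.
    replace (2*(j+1)+3)%nat with (2*j+5)%nat in E by lia.
    pose proof (s_le (2*j+4) (2*j+5) ltac:(lia)). lia.
  - assert (i < i')%nat by nia. nia.
  - pose proof (s_le (2*j'+5) (2*j+3) ltac:(lia)).
    pose proof (s_le (2*j+3) (2*j+4) ltac:(lia)). lia.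
Qed.

Lemma M_pos i j : 0 < M i j.
Proof.
  revert i; induction j; intros i; simpl; [lra|].
  pose proof (w_pos i). pose proof (IHj (S i)). nra.
Qed.

Lemma half_pow_le n : (/2)^n <= 1.
Proof.
  induction n; simpl; [lra|]. pose proof (pow_le (/2) n ltac:(lra)). nra.
Qed.

Lemma partA k : (1 <= k)%nat -> M 1 (s (2 * k + 1)) = 1.
Proof.
  intros H. replace (2*k+1)%nat with (2*(k-1)+3)%nat by lia. apply M_odd_end.
Qed.

Lemma window k i : (1 <= k)%nat -> (s (2*k+1) < i)%nat -> forall j, (j <= nk k)%nat ->
  (M i j >= 1 /\ forall x, (i <= x < i + j)%nat -> w x <> /2) \/
  (M i j >= /2 /\ exists x, (i <= x < i + j)%nat /\ w x = /2).
Proof.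
  intros Hk Hi. induction j; intros Hj.
  - left. split; [simpl; lra| intros; lia].
  - rewrite M_S. pose proof (M_pos i j) as Mp.
    destruct (IHj ltac:(lia)) as [[H1 H2]|[H1 [x [Hx Wx]]]];
    destruct (w_vals (i+j)) as [W|[W|W]]; rewrite W.
    + left. split; [nra|]. intros x Hx. destruct (Nat.eq_dec x (i+j)) as [->|].
      * rewrite W; lra.
      * apply H2; lia.
    + left. split; [nra|]. intros x Hx. destruct (Nat.eq_dec x (i+j)) as [->|].
      * rewrite W; lra.
      * apply H2; lia.
    + right. split; [nra|]. exists (i+j)%nat. split; [lia|assumption].
    + right. split; [nra|]. exists x. split; [lia|assumption].
    + right. split; [nra|]. exists x. split; [lia|assumption].
    + exfalso. pose proof (separation k x (i+j) Hk ltac:(lia) ltac:(lia) Wx W).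
      unfold nk in Hj. lia.
Qed.

Lemma partB1 k i : (2 <= k)%nat -> (s (2 * k + 1) < i)%nat -> M i (nk k) >= / 2.
Proof.
  intros Hk Hi. destruct (window k i ltac:(lia) Hi (nk k) (le_n _)) as [[H _]|[H _]]; lra.
Qed.

Lemma Pbound_gen j m : (s (2*j+3) <= m <= s (2*j+5))%nat -> M 1 m <= 2 ^ (s (2*j+3)).
Proof.
  intros Hm. pose proof (M_odd_end j) as H0.
  pose proof (s_odd j) as So. pose proof (s_even j) as Se.
  destruct (Compare_dec.le_lt_dec m (s (2*j+4))).
  - replace m with (s (2*j+3) + (m - s (2*j+3)))%nat by lia.
    rewrite even_int by (auto; lia). apply Rle_pow; [lra|lia].
  - set (a := s (2*j+4)) in *. set (r := (s (2*j+3) - 1)%nat) in *.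
    set (q := (m - a - 1)%nat).
    pose proof (Nat.div_mod q (a+1) ltac:(lia)) as Dq.
    pose proof (Nat.mod_upper_bound q (a+1) ltac:(lia)) as Mq.
    set (c := (q / (a+1))%nat) in *. set (d := (q mod (a+1))%nat) in *.
    replace m with (a + 1 + c * (a+1) + d)%nat by (unfold q in Dq; lia).
    unfold a; rewrite (odd_int j H0 c d) by (unfold q in Dq; lia).
    pose proof (half_pow_le (S c)). pose proof (pow_le 2 (s (2*j+3)) ltac:(lra)). nra.
Qed.

Lemma Pbound j m : (m <= s (2*j+5))%nat -> M 1 m <= 2 ^ (s (2*j+3)).
Proof.
  revert m. induction j; intros m Hm.
  - destruct (Compare_dec.le_lt_dec m 2).
    + replace (2*0+3)%nat with 3%nat by lia. rewrite s3.
      destruct m as [|[|[|]]]; try lia; simpl; try rewrite w1; try rewrite w2; lra.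
    + apply Pbound_gen. replace (2*0+3)%nat with 3%nat by lia. rewrite s3. lia.
  - replace (2 * S j + 3)%nat with (2*j+5)%nat by lia.
    replace (2 * S j + 5)%nat with (2*j+7)%nat in Hm by lia.
    destruct (Compare_dec.le_lt_dec m (s (2*j+5))).
    + apply Rle_trans with (2 ^ s (2*j+3)); [auto|].
      apply Rle_pow; [lra|]. apply s_le; lia.
    + replace (2*j+5)%nat with (2*(S j)+3)%nat by lia. apply Pbound_gen.
      replace (2*(S j)+3)%nat with (2*j+5)%nat by lia.
      replace (2*(S j)+5)%nat with (2*j+7)%nat by lia. lia.
Qed.

Lemma Plower J t : (t <= s (2*J+3) - 1)%nat -> M 1 (s (2*J+4) + t) >= 2 ^ (s (2*J+3) - 1).
Proof.
  intros Ht. pose proof (M_odd_end J) as H0. pose proof (s_even J) as Se.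
  pose proof (s_odd_ge2 J).
  destruct t.
  - rewrite Nat.add_0_r, (even_end J H0). apply Rle_ge, Rle_pow; [lra|lia].
  - replace (s (2*J+4) + S t)%nat with (s (2*J+4) + 1 + 0 * (s (2*J+4) + 1) + t)%nat by lia.
    rewrite (odd_int J H0 0 t) by nia.
    replace (s (2*J+3)) with (S (s (2*J+3) - 1)) at 1 by lia.
    simpl. apply Rle_ge. apply Req_le. field.
Qed.

Lemma s_odd_grow j : (j + 2 <= s (2*j+3))%nat.
Proof.
  induction j. { replace (2*0+3)%nat with 3%nat by lia. rewrite s3. lia. }
  replace (2 * S j + 3)%nat with (2*j+5)%nat by lia. rewrite s_odd, s_even. nia.
Qed.

Lemma partB2 k i : (2 <= k)%nat -> (1 <= i <= s (2 * k + 1))%nat -> M i (nk k) >= 2 ^ k.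
Proof.
  intros Hk Hi.
  set (J := (k - 1)%nat). set (j := (k - 2)%nat).
  assert (ES : s (2*k+1) = s (2*J+3)) by (f_equal; unfold J; lia).
  assert (Enk : nk k = s (2*J+4)) by (unfold nk; f_equal; unfold J; lia).
  pose proof (s_even J) as Se.
  pose proof (M_add 1 (i-1) (nk k)) as A. replace (1 + (i-1))%nat with i in A by lia.
  assert (Hup : M 1 (i-1) <= 2 ^ (s (2*j+3))).
  { apply Pbound. replace (2*j+5)%nat with (2*k+1)%nat by (unfold j; lia). lia. }
  assert (Hlow : M 1 (i - 1 + nk k) >= 2 ^ (s (2*J+3) - 1)).
  { rewrite Enk. replace (i - 1 + s (2*J+4))%nat with (s (2*J+4) + (i-1))%nat by lia.
    apply Plower. lia. }
  assert (Sg : (s (2*J+3) - 1 = s (2*j+3) + k + ((s (2*J+3) - 1) - s (2*j+3) - k))%nat).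
  { replace (2*J+3)%nat with (2*j+5)%nat by (unfold J, j; lia). rewrite s_odd, s_even.
    pose proof (s_odd_grow j). unfold j in *. nia. }
  rewrite Sg, !pow_add in Hlow.
  pose proof (M_pos 1 (i-1)). pose proof (M_pos i (nk k)).
  pose proof (pow_lt 2 (s (2*j+3)) ltac:(lra)). pose proof (pow_lt 2 k ltac:(lra)).
  assert (1 <= 2 ^ ((s (2*J+3) - 1) - s (2*j+3) - k)) by (apply pow_R1_Rle; lra).
  rewrite A in Hlow.
  apply Rle_ge. apply Rmult_le_reg_l with (M 1 (i-1)); [assumption|].
  apply Rle_trans with (2 ^ s (2 * j + 3) * 2 ^ k).
  { apply Rmult_le_compat_r; lra. }
  apply Rle_trans with (2 ^ s (2 * j + 3) * 2 ^ k * 2 ^ ((s (2*J+3) - 1) - s (2*j+3) - k)); [|lra].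
  rewrite <- (Rmult_1_r (2 ^ s (2 * j + 3) * 2 ^ k)) at 1.
  apply Rmult_le_compat_l; [nra|lra].
Qed.

Lemma Rpower_pos' a p : 0 < Rpower a p.
Proof. unfold Rpower. apply exp_pos. Qed.

Lemma rp_nonneg a p : 0 <= rpow a p.
Proof. unfold rpow. destruct (Rle_dec a 0); [lra|]. left; apply Rpower_pos'. Qed.

Lemma rp_mono a b p : 0 <= p -> 0 <= a <= b -> rpow a p <= rpow b p.
Proof.
  intros Hp Hab. unfold rpow. destruct (Rle_dec a 0); destruct (Rle_dec b 0).
  - lra.
  - left; apply Rpower_pos'.
  - lra.
  - apply Rle_Rpower_l; lra.
Qed.

Lemma rp_mult c a p : 0 < c -> 0 <= a -> rpow (c * a) p = Rpower c p * rpow a p.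
Proof.
  intros Hc Ha. unfold rpow. destruct (Rle_dec a 0); destruct (Rle_dec (c*a) 0).
  - ring.
  - exfalso. nra.
  - exfalso. nra.
  - symmetry. apply Rpower_mult_distr; lra.
Qed.

Lemma R2p_ge1 p : 0 <= p -> 1 <= Rpower 2 p.
Proof. intros. rewrite <- (Rpower_O 2) by lra. apply Rle_Rpower; lra. Qed.

Lemma rp_bound x y c p : 0 <= p -> 0 < c -> Rabs x <= c * Rabs y ->
  rpow (Rabs x) p <= Rpower c p * rpow (Rabs y) p.
Proof.
  intros Hp Hc H. rewrite <- rp_mult by (auto; apply Rabs_pos).
  apply rp_mono; [lra|]. split; [apply Rabs_pos|lra].
Qed.

Lemma rp_sub x y p : 0 <= p ->
  rpow (Rabs (x - y)) p <= Rpower 2 p * (rpow (Rabs x) p + rpow (Rabs y) p).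
Proof.
  intros Hp. pose proof (rp_nonneg (Rabs x) p). pose proof (rp_nonneg (Rabs y) p).
  pose proof (R2p_ge1 p Hp).
  pose proof (Rabs_triang x (-y)). rewrite Rabs_Ropp in H2. unfold Rminus.
  destruct (Rle_dec (Rabs y) (Rabs x)).
  - pose proof (rp_bound (x + - y) x 2 p Hp ltac:(lra) ltac:(lra)). nra.
  - pose proof (rp_bound (x + - y) y 2 p Hp ltac:(lra) ltac:(lra)). nra.
Qed.

Lemma rp_add x y p : 0 <= p ->
  rpow (Rabs (x + y)) p <= Rpower 2 p * (rpow (Rabs x) p + rpow (Rabs y) p).
Proof.
  intros Hp. replace (x + y) with (x - - y) by ring. rewrite <- (Rabs_Ropp y). apply rp_sub; auto.
Qed.

Lemma rp_inv_lt S e p : 1 <= p -> 0 < e -> S < Rpower e p -> rpow S (/p) < e.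
Proof.
  intros Hp He HS. unfold rpow. destruct (Rle_dec S 0); [lra|].
  apply Rlt_le_trans with (Rpower (Rpower e p) (/p)).
  - apply Rlt_Rpower_l; [apply Rinv_0_lt_compat; lra| lra].
  - rewrite Rpower_mult. rewrite Rinv_r by lra. rewrite Rpower_1 by lra. lra.
Qed.

Lemma rp_coord x S p : 1 <= p -> rpow (Rabs x) p <= S -> Rabs x <= rpow S (/p).
Proof.
  intros Hp H. unfold rpow. unfold rpow in H.
  destruct (Rle_dec (Rabs x) 0).
  - pose proof (Rabs_pos x). apply Rle_trans with 0; [lra|].
    destruct (Rle_dec S 0); [lra| left; apply Rpower_pos'].
  - destruct (Rle_dec S 0). { pose proof (Rpower_pos' (Rabs x) p). lra. }
    apply Rle_trans with (Rpower (Rpower (Rabs x) p) (/p)).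
    + rewrite Rpower_mult, Rinv_r, Rpower_1 by lra. lra.
    + apply Rle_Rpower_l; [left; apply Rinv_0_lt_compat; lra|]. split; [apply Rpower_pos'|lra].
Qed.

Lemma rp_zero p : rpow (Rabs 0) p = 0.
Proof. unfold rpow. rewrite Rabs_R0. destruct (Rle_dec 0 0); lra. Qed.

Lemma rp_pow_le a p : 1 <= p -> 0 < a <= 1 -> Rpower a p <= a.
Proof.
  intros Hp Ha. unfold Rpower. rewrite <- (exp_ln a) at 2 by lra.
  assert (ln a <= 0).
  { destruct (Req_dec a 1) as [->|]. rewrite ln_1; lra.
    rewrite <- ln_1. left. apply ln_increasing; lra. }
  destruct (Req_dec (p * ln a) (ln a)) as [E|E]. { rewrite E; lra. }
  left. apply exp_increasing. nra.
Qed.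

Lemma exs_plus a b : ex_series a -> ex_series b -> ex_series (fun n => a n + b n).
Proof. intros Ha Hb. apply (ex_series_plus a b Ha Hb). Qed.

Lemma exs_scal c a : ex_series a -> ex_series (fun n => c * a n).
Proof. intros Ha. apply (ex_series_scal_l c a Ha). Qed.

Lemma exs_le a b : (forall n, 0 <= a n <= b n) -> ex_series b -> ex_series a.
Proof.
  intros H Hb. apply (ex_series_le a b); [|assumption].
  intros n. change (norm (a n)) with (Rabs (a n)). rewrite Rabs_pos_eq; apply H.
Qed.

Lemma Series_zero : Series (fun _ => 0) = 0.
Proof.
  rewrite (Series_ext _ (fun n => 0 * (fun _ => 0) n)) by (intros; simpl; ring).
  rewrite Series_scal_l. ring.
Qed.

Lemma Series_nonneg a : (forall n, 0 <= a n) -> ex_series a -> 0 <= Series a.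
Proof.
  intros H Ha. rewrite <- Series_zero. apply Series_le; [|assumption]. intros; split; [lra|apply H].
Qed.

Lemma term_le_Series a n : (forall n, 0 <= a n) -> ex_series a -> a n <= Series a.
Proof.
  intros H Ha. rewrite (Series_incr_n a (S n)) by (auto; lia). simpl pred.
  assert (a n <= sum_f_R0 a n).
  { destruct n; simpl; [lra|]. pose proof (cond_pos_sum a n H). lra. }
  assert (0 <= Series (fun k => a (S n + k)%nat)).
  { apply Series_nonneg; [intros; apply H|]. apply (ex_series_incr_n a (S n)). assumption. }
  lra.
Qed.

Lemma tail_small a : ex_series a -> forall d, 0 < d ->
  exists N0, forall N, (N0 <= N)%nat -> Series (fun j => a (N + j)%nat) < d.
Proof.
  intros Ha d Hd.
  pose proof (Series_correct a Ha) as C.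
  assert (C' : is_lim_seq (sum_n a) (Series a)) by exact C.
  apply is_lim_seq_spec in C'. destruct (C' (mkposreal d Hd)) as [N1 HN1].
  exists (S N1). intros N HN.
  rewrite (Series_incr_n a N) in HN1 by (auto; lia) .
  specialize (HN1 (pred N) ltac:(lia)). simpl in HN1.
  rewrite sum_n_Reals in HN1.
  apply Rabs_lt_between in HN1. lra.
Qed.

Lemma iterF n x m : Nat.iter n Fw x m =
  if (m <? n)%nat then 0 else x (m - n)%nat / M (m - n + 1) n.
Proof.
  revert m. induction n; intros m.
  - simpl. rewrite Nat.sub_0_r. field.
  - change (Nat.iter (S n) Fw x) with (Fw (Nat.iter n Fw x)).
    destruct m. { reflexivity. }
    unfold Fw at 1. rewrite IHn.
    replace (S m <? S n)%nat with (m <? n)%nat by reflexivity.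
    destruct (Nat.ltb_spec m n). { unfold Rdiv. ring. }
    replace (S m - S n)%nat with (m - n)%nat by lia.
    rewrite M_S. replace (m - n + 1 + n)%nat with (S m) by lia.
    pose proof (M_pos (m-n+1) n). pose proof (w_pos (S m)). field. lra.
Qed.

Lemma iterB n x m : Nat.iter n Bw x m = M (S m) n * x (m + n)%nat.
Proof.
  revert m. induction n; intros m.
  - simpl. rewrite Nat.add_0_r. ring.
  - change (Nat.iter (S n) Bw x) with (Bw (Nat.iter n Bw x)).
    unfold Bw at 1. rewrite IHn. simpl M. replace (S m + n)%nat with (m + S n)%nat by lia. ring.
Qed.

Lemma BF n y : Nat.iter n Bw (Nat.iter n Fw y) = y.
Proof.
  apply functional_extensionality. intros m. rewrite iterB, iterF.
  destruct (Nat.ltb_spec (m+n) n). { lia. }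
  replace (m + n - n)%nat with m by lia. replace (m+1)%nat with (S m) by lia.
  pose proof (M_pos (S m) n). field. lra.
Qed.

Lemma coef_bound k j x : (2 <= k)%nat -> Rabs (x / M (S j) (nk k)) <= 2 * Rabs x /\
  ((j < s (2*k+1))%nat -> Rabs (x / M (S j) (nk k)) <= / 2 ^ k * Rabs x).
Proof.
  intros Hk. pose proof (M_pos (S j) (nk k)) as Mp.
  unfold Rdiv. rewrite Rabs_mult, Rabs_inv, (Rabs_pos_eq (M _ _)) by lra.
  pose proof (Rabs_pos x). split.
  - pose proof (partB1 k (s (2*k+1) + S j) Hk ltac:(lia)).
    destruct (Compare_dec.le_lt_dec (s (2*k+1)) j).
    + pose proof (partB1 k (S j) Hk ltac:(lia)).
      assert (/ M (S j) (nk k) <= 2). { rewrite <- (Rinv_inv 2). apply Rinv_le_contravar; lra. }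
      nra.
    + pose proof (partB2 k (S j) Hk ltac:(lia)). pose proof (pow_R1_Rle 2 k ltac:(lra)).
      assert (/ M (S j) (nk k) <= 2). { rewrite <- (Rinv_inv 2). apply Rinv_le_contravar; lra. }
      nra.
  - intros Hj. pose proof (partB2 k (S j) Hk ltac:(lia)). pose proof (pow_lt 2 k ltac:(lra)).
    assert (/ M (S j) (nk k) <= / 2 ^ k). { apply Rinv_le_contravar; lra. }
    pose proof (Rinv_0_lt_compat (2^k) H1). nra.
Qed.

Lemma S_grow k : (1 <= k)%nat -> (k + 1 <= s (2*k+1))%nat /\ (s (2*k+1) <= nk k)%nat.
Proof.
  intros Hk. split.
  - pose proof (s_odd_grow (k-1)). replace (2*(k-1)+3)%nat with (2*k+1)%nat in H by lia. lia.
  - unfold nk. apply s_le. lia.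
Qed.

Lemma pow2_large A : exists K, forall k, (K <= k)%nat -> A < 2 ^ k.
Proof.
  destruct (INR_unbounded A) as [K HK]. exists K. intros k Hk.
  assert (forall m, INR m <= 2 ^ m).
  { induction m. simpl; lra. rewrite S_INR. simpl. pose proof (pow_R1_Rle 2 m ltac:(lra)). lra. }
  pose proof (le_INR _ _ Hk). pose proof (H k). lra.
Qed.

Definition V (u y : nat -> R) k : nat -> R :=
  fun m => if (m <? nk k)%nat then 0 else Nat.iter (nk k) Fw y m - u m.

Lemma V_shift u y k j : V u y k (nk k + j)%nat = y j / M (S j) (nk k) - u (nk k + j)%nat.
Proof.
  unfold V. destruct (Nat.ltb_spec (nk k + j) (nk k)); [lia|].
  rewrite iterF. destruct (Nat.ltb_spec (nk k + j) (nk k)); [lia|].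
  replace (nk k + j - nk k)%nat with j by lia. replace (j+1)%nat with (S j) by lia. reflexivity.
Qed.

Lemma V_low u y k m : (m < nk k)%nat -> V u y k m = 0.
Proof. intros H. unfold V. destruct (Nat.ltb_spec m (nk k)); [reflexivity|lia]. Qed.

Lemma keyLp p u y : 1 <= p -> inX (Lp p) u -> inX (Lp p) y -> forall e, 0 < e ->
  exists K, forall k, (K <= k)%nat -> inX (Lp p) (V u y k) /\ normX (Lp p) (V u y k) < e.
Proof.
  intros Hp Hu Hy e He. simpl in Hu, Hy |- *.
  set (ay := fun n => rpow (Rabs (y n)) p) in *.
  set (au := fun n => rpow (Rabs (u n)) p) in *.
  set (C := Rpower 2 p). assert (HC : 1 <= C) by (apply R2p_ge1; lra).
  set (E := Rpower e p). assert (HE : 0 < E) by apply Rpower_pos'.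
  assert (ay_nn : forall n, 0 <= ay n) by (intros; apply rp_nonneg).
  assert (au_nn : forall n, 0 <= au n) by (intros; apply rp_nonneg).
  set (Sy := Series ay). assert (HSy : 0 <= Sy) by (apply Series_nonneg; auto).
  destruct (tail_small ay Hy (E / (3*C*C)) ltac:(apply Rdiv_lt_0_compat; nra)) as [Ny HNy].
  destruct (tail_small au Hu (E / (3*C)) ltac:(apply Rdiv_lt_0_compat; nra)) as [Nu HNu].
  destruct (pow2_large (3*C*Sy/E)) as [K0 HK0].
  exists (Nat.max 2 (Nat.max K0 (Nat.max Ny Nu))). intros k Hk.
  assert (Hk2 : (2 <= k)%nat) by lia.
  destruct (S_grow k ltac:(lia)) as [G1 G2].
  set (n := nk k) in *. set (Sk := s (2*k+1)) in *.
  set (D := / 2 ^ k). assert (HD : 0 < D) by (apply Rinv_0_lt_compat, pow_lt; lra).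
  assert (HD1 : D <= 1).
  { unfold D. rewrite <- Rinv_1. apply Rinv_le_contravar; [lra|]. apply pow_R1_Rle; lra. }
  set (ind := fun j => if (j <? Sk)%nat then 0 else ay j).
  assert (ind_nn : forall j, 0 <= ind j) by (intros; unfold ind; destruct (j <? Sk)%nat; auto; lra).
  set (G := fun j => C * (D * ay j + C * ind j + au (n + j)%nat)).
  assert (Hind : ex_series ind).
  { apply (exs_le ind ay); [|assumption]. intros j; split; auto. unfold ind. destruct (j <? Sk)%nat; auto. lra. }
  assert (Hau' : ex_series (fun j => au (n + j)%nat)) by (apply (ex_series_incr_n au n); assumption).
  assert (HG : ex_series G).
  { unfold G. apply exs_scal. apply exs_plus; [apply exs_plus|]; auto; apply exs_scal; auto. }
  assert (Hbound : forall j, 0 <= rpow (Rabs (V u y k (n + j)%nat)) p <= G j).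
  { intros j. split; [apply rp_nonneg|]. rewrite V_shift. fold n.
    eapply Rle_trans; [apply rp_sub; lra|]. fold C. unfold G.
    apply Rmult_le_compat_l; [lra|].
    fold (au (n+j)%nat).
    assert (rpow (Rabs (y j / M (S j) n)) p <= D * ay j + C * ind j); [|lra].
    destruct (coef_bound k j (y j) Hk2) as [B1 B2]. fold n in B1, B2.
    unfold ind. destruct (Nat.ltb_spec j Sk).
    - specialize (B2 H). eapply Rle_trans; [apply (rp_bound (y j / M (S j) n) (y j) D p); auto; lra|].
      pose proof (rp_pow_le D p Hp ltac:(lra)). fold (ay j). pose proof (ay_nn j). nra.
    - eapply Rle_trans; [apply (rp_bound (y j / M (S j) n) (y j) 2 p); auto; lra|]. fold C. fold (ay j).
      pose proof (ay_nn j). nra. }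
  assert (HV' : ex_series (fun j => rpow (Rabs (V u y k (n + j)%nat)) p)).
  { apply (exs_le _ G); auto. }
  assert (HV : ex_series (fun m => rpow (Rabs (V u y k m)) p)).
  { apply (ex_series_incr_n _ n). assumption. }
  split; [assumption|].
  apply rp_inv_lt; auto.
  rewrite (Series_incr_n_aux _ n).
  2:{ intros m Hm. rewrite V_low by assumption. apply rp_zero. }
  apply Rle_lt_trans with (Series G); [apply Series_le; auto|].
  assert (SG : Series G = C * (D * Sy + C * Series (fun j => ay (Sk + j)%nat) + Series (fun j => au (n+j)%nat))).
  { unfold G. rewrite Series_scal_l. f_equal.
    rewrite Series_plus; [| apply exs_plus; apply exs_scal; auto | auto].
    rewrite Series_plus; [| apply exs_scal; auto | apply exs_scal; auto].
    rewrite !Series_scal_l. f_equal. f_equal. f_equal.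
    rewrite (Series_incr_n_aux ind Sk).
    2:{ intros m Hm. unfold ind. destruct (Nat.ltb_spec m Sk); [reflexivity|lia]. }
    apply Series_ext. intros m. unfold ind. destruct (Nat.ltb_spec (Sk + m) Sk); [lia|reflexivity]. }
  rewrite SG.
  pose proof (HNy Sk ltac:(lia)). pose proof (HNu n ltac:(lia)).
  pose proof (HK0 k ltac:(lia)).
  assert (D * Sy * C < E / 3).
  { pose proof (pow_lt 2 k ltac:(lra)) as P2.
    assert (A1 : 3 * C * Sy < E * 2 ^ k).
    { replace (3 * C * Sy) with ((3 * C * Sy / E) * E) by (field; lra). nra. }
    replace (D * Sy * C) with ((3 * C * Sy) * / 2 ^ k / 3) by (unfold D; field; lra).
    replace (E / 3) with ((E * 2 ^ k) * / 2 ^ k / 3) by (field; lra).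
    pose proof (Rinv_0_lt_compat _ P2). nra. }
  assert (C * (C * Series (fun j => ay (Sk + j)%nat)) < E / 3).
  { replace (E/3) with (C * (C * (E / (3*C*C)))) by (field; lra).
    apply Rmult_lt_compat_l; [lra|]. apply Rmult_lt_compat_l; lra. }
  assert (C * Series (fun j => au (n + j)%nat) < E / 3).
  { replace (E/3) with (C * (E / (3*C))) by (field; lra). apply Rmult_lt_compat_l; lra. }
fold E.   match goal with |- C * (D * Sy + C * ?T + ?U) < E => 
    replace (C * (D * Sy + C * T + U)) with (D * Sy * C + C * (C * T) + C * U) by ring end.
  lra.
Qed.

Lemma c0_ev z : is_lim_seq z 0 -> forall d, 0 < d -> exists N, forall n, (N <= n)%nat -> Rabs (z n) < d.
Proof.
  intros H d Hd. apply is_lim_seq_spec in H. destruct (H (mkposreal d Hd)) as [N HN].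
  exists N. intros n Hn. specialize (HN n Hn). simpl in HN. rewrite Rminus_0_r in HN. assumption.
Qed.

Lemma c0_of_ev z : (forall d, 0 < d -> exists N, forall n, (N <= n)%nat -> Rabs (z n) < d) -> is_lim_seq z 0.
Proof.
  intros H. apply is_lim_seq_spec. intros [d Hd]. destruct (H d Hd) as [N HN].
  exists N. intros n Hn. simpl. rewrite Rminus_0_r. apply HN; assumption.
Qed.

Lemma c0_bounded z : is_lim_seq z 0 -> exists B, 0 <= B /\ forall n, Rabs (z n) <= B.
Proof.
  intros H. destruct (c0_ev z H 1 ltac:(lra)) as [N HN].
  assert (forall N, exists B, 0 <= B /\ forall n, (n < N)%nat -> Rabs (z n) <= B).
  { induction N0. { exists 0. split; [lra| intros; lia]. }
    destruct IHN0 as [B [HB HB']]. exists (Rmax B (Rabs (z N0))). split.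
    - apply Rle_trans with B; [lra| apply Rmax_l].
    - intros n Hn. destruct (Nat.eq_dec n N0) as [->|]; [apply Rmax_r|].
      apply Rle_trans with B; [apply HB'; lia| apply Rmax_l]. }
  destruct (H0 N) as [B [HB HB']]. exists (Rmax B 1). split; [apply Rle_trans with B; [lra|apply Rmax_l]|].
  intros n. destruct (Compare_dec.le_lt_dec N n).
  - apply Rle_trans with 1; [left; apply HN; auto| apply Rmax_r].
  - apply Rle_trans with B; [apply HB'; auto| apply Rmax_l].
Qed.

Lemma c0_dom z a b : is_lim_seq a 0 -> is_lim_seq b 0 ->
  (forall m, Rabs (z m) <= 2 * Rabs (a m) + Rabs (b m)) -> is_lim_seq z 0.
Proof.
  intros Ha Hb H. apply c0_of_ev. intros d Hd.
  destruct (c0_ev a Ha (d/4) ltac:(lra)) as [N1 H1].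
  destruct (c0_ev b Hb (d/2) ltac:(lra)) as [N2 H2].
  exists (Nat.max N1 N2). intros n Hn. specialize (H1 n ltac:(lia)). specialize (H2 n ltac:(lia)).
  specialize (H n). lra.
Qed.

Lemma Sup_const (c : R) : Sup_seq (fun _ => Finite c) = Finite c.
Proof.
  apply is_sup_seq_unique. intros eps. split.
  - intros n. simpl. destruct eps; simpl; lra.
  - exists 0%nat. simpl. destruct eps; simpl; lra.
Qed.

Lemma supnorm_le z c : 0 <= c -> (forall n, Rabs (z n) <= c) -> normX C0 z <= c.
Proof.
  intros Hc H. simpl.
  assert (H1 : Rbar_le (Sup_seq (fun n => Rabs (z n))) (Sup_seq (fun _ => Finite c))).
  { apply Sup_seq_le. intros n. simpl. apply H. }
  rewrite Sup_const in H1.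
  destruct (Sup_seq (fun n => Rabs (z n))); simpl in *; lra.
Qed.

Lemma supnorm_nonneg z : 0 <= normX C0 z.
Proof.
  simpl. pose proof (Sup_seq_minor_le (fun n => Finite (Rabs (z n))) (Rabs (z 0%nat)) 0%nat ltac:(simpl; lra)).
  destruct (Sup_seq (fun n => Rabs (z n))); simpl in *; try lra. pose proof (Rabs_pos (z 0%nat)). lra.
Qed.

Lemma supnorm_coord z n : is_lim_seq z 0 -> Rabs (z n) <= normX C0 z.
Proof.
  intros H. destruct (c0_bounded z H) as [B [HB HB']]. simpl.
  pose proof (Sup_seq_minor_le (fun n => Finite (Rabs (z n))) (Rabs (z n)) n ltac:(simpl; lra)).
  assert (H1 : Rbar_le (Sup_seq (fun n => Rabs (z n))) (Sup_seq (fun _ => Finite B))).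
  { apply Sup_seq_le. intros m. simpl. apply HB'. }
  rewrite Sup_const in H1.
  destruct (Sup_seq (fun n => Rabs (z n))); simpl in *; lra.
Qed.

Lemma keyC0 u y : inX C0 u -> inX C0 y -> forall e, 0 < e ->
  exists K, forall k, (K <= k)%nat -> inX C0 (V u y k) /\ normX C0 (V u y k) < e.
Proof.
  intros Hu Hy e He. simpl in Hu, Hy.
  destruct (c0_bounded y Hy) as [B [HB HB']].
  destruct (c0_ev y Hy (e/8) ltac:(lra)) as [Ny HNy].
  destruct (c0_ev u Hu (e/4) ltac:(lra)) as [Nu HNu].
  destruct (pow2_large (8*B/e)) as [K0 HK0].
  exists (Nat.max 2 (Nat.max K0 (Nat.max Ny Nu))). intros k Hk.
  assert (Hk2 : (2 <= k)%nat) by lia.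
  destruct (S_grow k ltac:(lia)) as [G1 G2].
  split.
  - simpl. apply (is_lim_seq_incr_n _ (nk k)).
    apply (c0_dom _ y (fun m => u (m + nk k)%nat)); auto.
    + apply (is_lim_seq_incr_n u (nk k)). assumption.
    + intros m. replace (m + nk k)%nat with (nk k + m)%nat by lia. rewrite V_shift.
      destruct (coef_bound k m (y m) Hk2) as [B1 _].
      unfold Rminus. eapply Rle_trans; [apply Rabs_triang|]. rewrite Rabs_Ropp. lra.
  - apply Rle_lt_trans with (e/2); [|lra]. apply supnorm_le; [lra|].
    intros m. destruct (Compare_dec.le_lt_dec (nk k) m).
    + replace m with (nk k + (m - nk k))%nat by lia. set (j := (m - nk k)%nat).
      rewrite V_shift. destruct (coef_bound k j (y j) Hk2) as [B1 B2].
      unfold Rminus. eapply Rle_trans; [apply Rabs_triang|]. rewrite Rabs_Ropp.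
      specialize (HNu (nk k + j)%nat ltac:(lia)).
      assert (Rabs (y j / M (S j) (nk k)) <= e/4); [|lra].
      destruct (Compare_dec.lt_dec j (s (2*k+1))).
      * specialize (B2 l0). eapply Rle_trans; [exact B2|].
        pose proof (HK0 k ltac:(lia)). pose proof (pow_lt 2 k ltac:(lra)).
        specialize (HB' j).
        assert (8 * B < e * 2^k). { replace (8*B) with ((8*B/e)*e) by (field; lra). nra. }
        apply Rle_trans with (B / 2^k).
        { unfold Rdiv. rewrite Rmult_comm. apply Rmult_le_compat_r; [|lra]. left; apply Rinv_0_lt_compat; lra. }
        apply Rmult_le_reg_r with (2^k); [lra|]. unfold Rdiv. rewrite Rmult_assoc, Rinv_l by lra. lra.
      * specialize (HNy j ltac:(lia)). lra.
    + rewrite V_low by assumption. rewrite Rabs_R0. lra.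
Qed.

Lemma exs_zero : ex_series (fun _ => 0).
Proof. exists 0. unfold is_series. apply filterlim_ext with (fun _ => 0).
  intros n. rewrite sum_n_Reals. rewrite sum_eq_R0; auto.
  apply filterlim_const. Qed.

Lemma key X u y : valid_space X -> inX X u -> inX X y -> forall e, 0 < e ->
  exists K, forall k, (K <= k)%nat -> inX X (V u y k) /\ normX X (V u y k) < e.
Proof. destruct X; simpl; intros; [apply keyC0| apply keyLp]; auto. Qed.

Lemma normX_nonneg X z : 0 <= normX X z.
Proof. destruct X; [apply supnorm_nonneg| simpl; apply rp_nonneg]. Qed.

Lemma coord X z n : valid_space X -> inX X z -> Rabs (z n) <= normX X z.
Proof.
  destruct X as [|p]; simpl; intros Hv Hz; [apply supnorm_coord; assumption|].
  apply rp_coord; [assumption|]. apply (term_le_Series (fun n => rpow (Rabs (z n)) p)); auto.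
  intros; apply rp_nonneg.
Qed.

Lemma inX_add X a b : valid_space X -> inX X a -> inX X b -> inX X (fun m => a m + b m).
Proof.
  destruct X as [|p]; simpl; intros Hv Ha Hb.
  - apply (c0_dom _ a b); auto. intros m. pose proof (Rabs_triang (a m) (b m)). pose proof (Rabs_pos (a m)). lra.
  - apply (exs_le _ (fun m => Rpower 2 p * (rpow (Rabs (a m)) p + rpow (Rabs (b m)) p))).
    + intros m. split; [apply rp_nonneg| apply rp_add; lra].
    + apply exs_scal, exs_plus; auto.
Qed.

Lemma inX_sub X a b : valid_space X -> inX X a -> inX X b -> inX X (seq_sub a b).
Proof.
  destruct X as [|p]; simpl; intros Hv Ha Hb; unfold seq_sub.
  - apply (c0_dom _ a b); auto. intros m. pose proof (Rabs_triang (a m) (- b m)). rewrite Rabs_Ropp in H.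
    pose proof (Rabs_pos (a m)). unfold Rminus. lra.
  - apply (exs_le _ (fun m => Rpower 2 p * (rpow (Rabs (a m)) p + rpow (Rabs (b m)) p))).
    + intros m. split; [apply rp_nonneg| apply rp_sub; lra].
    + apply exs_scal, exs_plus; auto.
Qed.

Lemma inX_Fw X y : valid_space X -> inX X y -> inX X (Fw y).
Proof.
  assert (Hb : forall m, Rabs (y m / w (S m)) <= 2 * Rabs (y m)).
  { intros m. pose proof (w_pos (S m)). unfold Rdiv. rewrite Rabs_mult, Rabs_inv, (Rabs_pos_eq (w _)) by lra.
    assert (/ w (S m) <= 2). { rewrite <- (Rinv_inv 2). apply Rinv_le_contravar; lra. }
    pose proof (Rabs_pos (y m)). pose proof (Rinv_0_lt_compat (w (S m)) ltac:(lra)). nra. }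
  destruct X as [|p]; simpl; intros Hv Hy.
  - apply is_lim_seq_incr_1. apply (c0_dom _ y (fun _ => 0)); auto.
    + apply is_lim_seq_const.
    + intros m. unfold Fw. rewrite Rabs_R0. specialize (Hb m). lra.
  - apply ex_series_incr_1. apply (exs_le _ (fun m => Rpower 2 p * rpow (Rabs (y m)) p)).
    + intros m. split; [apply rp_nonneg|]. unfold Fw. apply rp_bound; auto; lra.
    + apply exs_scal; auto.
Qed.

Definition e0 : nat -> R := fun m => if (m =? 0)%nat then 1 else 0.

Lemma inX_e0 X : valid_space X -> inX X e0.
Proof.
  destruct X as [|p]; simpl; intros Hv.
  - apply is_lim_seq_incr_1. apply is_lim_seq_const.
  - apply ex_series_incr_1. apply (ex_series_ext (fun _ => 0)); [|apply exs_zero].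
    intros n. simpl. rewrite rp_zero. reflexivity.
Qed.

Lemma inX_zero X : valid_space X -> inX X zero_seq.
Proof.
  destruct X as [|p]; simpl; intros Hv.
  - apply is_lim_seq_const.
  - apply (ex_series_ext (fun _ => 0)); [|apply exs_zero]. intros n. unfold zero_seq. rewrite rp_zero. reflexivity.
Qed.

Lemma partC X : valid_space X ->
     surjective_on X Bw /\
     ~ mixing X Bw /\
     strongly_transitive X Bw /\
     (forall x, inX X x -> is_lim_seq (fun k => normX X (Nat.iter (nk k) Fw x)) 0).
Proof.
  intros Hv. split; [|split; [|split]].
  - intros y Hy. exists (Fw y). split; [apply inX_Fw; auto|].
    apply functional_extensionality. intros n. unfold Bw, Fw.
    pose proof (w_pos (S n)). field. lra.
  - intros Hmix.
    set (U := fun x => inX X x /\ exists d, 0 < d /\ Rabs (x 0%nat - 1) < /2 - d /\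
                   forall n, (1 <= n)%nat -> Rabs (x n) <= /2 - d).
    assert (HU : openX X U).
    { split; [intros x Hx; apply Hx|]. intros x [Hx [d [Hd [H0 Hn]]]].
      exists (d/2). split; [lra|]. intros y Hy Hyx. split; [assumption|].
      assert (Hc : forall n, Rabs (y n - x n) < d/2).
      { intros n. eapply Rle_lt_trans; [|exact Hyx]. apply (coord X (seq_sub y x) n Hv). apply inX_sub; auto. }
      exists (d/2). split; [lra|]. split.
      - specialize (Hc 0%nat). pose proof (Rabs_triang (y 0%nat - x 0%nat) (x 0%nat - 1)).
        replace (y 0%nat - x 0%nat + (x 0%nat - 1)) with (y 0%nat - 1) in H by ring. lra.
      - intros n Hn1. specialize (Hc n). specialize (Hn n Hn1).
        pose proof (Rabs_triang (y n - x n) (x n)). replace (y n - x n + x n) with (y n) in H by ring. lra. }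
    assert (Hne : exists x, U x).
    { exists e0. split; [apply inX_e0; auto|]. exists (/4). split; [lra|]. split.
      - unfold e0. simpl. rewrite Rminus_diag, Rabs_R0. lra.
      - intros n Hn. unfold e0. destruct (Nat.eqb_spec n 0); [lia|]. rewrite Rabs_R0. lra. }
    destruct (Hmix U U HU HU Hne Hne) as [N HN].
    destruct (S_grow (S N) ltac:(lia)) as [G1 _].
    destruct (HN (s (2 * S N + 1)) ltac:(lia)) as [x [[_ [d1 [Hd1 [_ Hx1]]]] [_ [d2 [Hd2 [Hx2 _]]]]]].
    rewrite iterB, partA in Hx2 by lia. simpl in Hx2. rewrite Rmult_1_l in Hx2.
    specialize (Hx1 (s (2 * S N + 1)) ltac:(lia)).
    pose proof (Rabs_triang (x (s (2 * S N + 1))) (- (x (s (2 * S N + 1)) - 1))).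
    rewrite Rabs_Ropp in H. replace (x (s (2 * S N + 1)) + - (x (s (2 * S N + 1)) - 1)) with 1 in H by ring.
    rewrite Rabs_R1 in H. replace (S (N + S (N + 0) + 1)) with (2 * S N + 1)%nat in Hx2 by lia. lra.
  - intros U [HU1 HU2] [u Hu] y Hy Hy0.
    destruct (HU2 u Hu) as [eps [Heps Hball]].
    destruct (key X u y Hv (HU1 u Hu) Hy eps Heps) as [K HK].
    destruct (HK K (le_n K)) as [HV1 HV2].
    set (x := fun m => u m + V u y K m).
    assert (Hsub : seq_sub x u = V u y K).
    { apply functional_extensionality. intros m. unfold seq_sub, x. ring. }
    exists (nk K), x. split.
    + apply Hball. { apply inX_add; auto. }
      rewrite Hsub. assumption.
    + apply functional_extensionality. intros m. rewrite iterB. unfold x.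
      replace (m + nk K)%nat with (nk K + m)%nat by lia. rewrite V_shift.
      pose proof (M_pos (S m) (nk K)). field. lra.
  - intros x Hx. apply is_lim_seq_spec. intros [eps Heps]. simpl.
    destruct (key X zero_seq x Hv (inX_zero X Hv) Hx eps Heps) as [K HK].
    exists K. intros k Hk. destruct (HK k Hk) as [_ H2].
    assert (E : Nat.iter (nk k) Fw x = V zero_seq x k).
    { apply functional_extensionality. intros m. unfold V, zero_seq.
      destruct (Nat.ltb_spec m (nk k)).
      - rewrite iterF. destruct (Nat.ltb_spec m (nk k)); [reflexivity|lia].
      - ring. }
    rewrite E, Rminus_0_r, Rabs_pos_eq by apply normX_nonneg. assumption.
Qed.

Theorem theorem1p1 :
  (* (a) *)
  (forall k : nat, (1 <= k)%nat -> M 1 (s (2 * k + 1)) = 1) /\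
  (* (b) *)
  (forall k : nat, (2 <= k)%nat ->
     (forall i : nat, (s (2 * k + 1) < i)%nat -> M i (nk k) >= / 2) /\
     (forall i : nat, (1 <= i <= s (2 * k + 1))%nat -> M i (nk k) >= 2 ^ k)) /\
  (* (c) *)
  (forall X : space, valid_space X ->
     surjective_on X Bw /\
     ~ mixing X Bw /\
     strongly_transitive X Bw /\
     (forall x, inX X x -> is_lim_seq (fun k => normX X (Nat.iter (nk k) Fw x)) 0)).
Proof.
  split; [exact partA|]. split.
  - intros k Hk. split; [intros i Hi; exact (partB1 k i Hk Hi)| intros i Hi; exact (partB2 k i Hk Hi)].
  - exact partC.
Qed.
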